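(* (1) The sets $A$, $A+A$ and $A\times A$ are infinite, but none of them is FSM Mostowski infinite and none is FSM Tarski II infinite. (2) None of $\wp_{fin}(A)$, $\wp_{cofin}(A)$, $\wp_{fs}(A)$, $\wp_{fin}(\wp_{fs}(A))$ is FSM Mostowski infinite. (3) None of $A^A_{fs}$, $T_{fin}(A)^A_{fs}$, $\wp_{fs}(A)^A_{fs}$ is FSM Mostowski infinite.
   Context: Framework (FSM). Work in ZF with a fixed infinite set $A$ of atoms; $S_A$ is the group of bijections of $A$ fixing all but finitely many atoms, acting on $A$ by evaluation; $Fix(S)$ is the set of $\pi\in S_A$ fixing each element of $S\subseteq A$; $S$ supports $x$ if $\pi\cdot x=x$ for all $\pi\in Fix(S)$. Products carry the componentwise action; $X+Y=\{(0,x):x\in X\}\cup\{(1,y):y\in Y\}$ with $\pi\cdot(i,z)=(i,\pi\cdot z)$; subsets carry $\pi\star W=\{\pi\cdot w:w\in W\}$. $\wp_{fs}(A)$: finitely supported subsets of $A$; $\wp_{fin}$: finite subsets; $\wp_{cofin}(A)$: cofinite subsets of $A$; $T_{fin}(A)$: finite injective tuples of atoms with componentwise action. For sets $X,Y$, $Y^X_{fs}$ is the set of finitely supported functions $X\to Y$ (functions $f$ for which some finite $S$ gives $f(\pi\cdot x)=\pi\cdot f(x)$ for all $\pi\in Fix(S)$), with action $(\pi\cdot f)(x)=\pi\cdot f(\pi^{-1}\cdot x)$. $X$ is FSM Mostowski infinite if there exist an infinite finitely supported subset $Y\subseteq X$ and a finitely supported total order on $Y$. $X$ is FSM Tarski II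 infinite if there is a nonempty finitely supported family of finitely supported subsets of $X$ that is totally ordered by inclusion and has no maximal element. *)

(* Defs.v *)
From Stdlib Require Import List.
Import ListNotations.
Set Implicit Arguments.

Definition atoms_infinite (Atom : Type) : Prop :=
  forall l : list Atom, exists a, ~ In a l.

Record perm (Atom : Type) := Perm {
  pf : Atom -> Atom;
  pinv : Atom -> Atom;
  pinvK : forall a, pinv (pf a) = a;
  pfK : forall a, pf (pinv a) = a;
  pfin : exists l : list Atom, forall a, ~ In a l -> pf a = a }.

Lemma pinv_fin (Atom : Type) (p : perm Atom) :
  exists l : list Atom, forall a, ~ In a l -> pinv p a = a.
Proof.
  destruct (pfin p) as [l Hl]; exists l; intros a Ha.
  rewrite <- (Hl a Ha) at 1. apply pinvK.
Qed.

Definition perm_inv (Atom : Type) (p : perm Atom) : perm Atom :=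
  @Perm Atom (pinv p) (pf p) (pfK p) (pinvK p) (pinv_fin p).

Definition fixes (Atom : Type) (S : list Atom) (p : perm Atom) : Prop :=
  forall a, In a S -> pf p a = a.

Definition supports (Atom U : Type) (act : perm Atom -> U -> U)
  (S : list Atom) (x : U) : Prop :=
  forall p, fixes S p -> act p x = x.

Definition fsupp (Atom U : Type) (act : perm Atom -> U -> U) (x : U) : Prop :=
  exists S : list Atom, supports act S x.

Definition act_atom (Atom : Type) (p : perm Atom) (a : Atom) : Atom := pf p a.

Definition act_prod (Atom U V : Type) (actU : perm Atom -> U -> U)
  (actV : perm Atom -> V -> V) (p : perm Atom) (x : U * V) : U * V :=
  (actU p (fst x), actV p (snd x)).

(* X + Y = {(0,x)} u {(1,y)} modelled by the sum type *)
Definition act_sum (Atom U V : Type) (actU : perm Atom -> U -> U)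
  (actV : perm Atom -> V -> V) (p : perm Atom) (x : U + V) : U + V :=
  match x with inl u => inl (actU p u) | inr v => inr (actV p v) end.

Definition act_pow (Atom U : Type) (act : perm Atom -> U -> U)
  (p : perm Atom) (W : U -> Prop) : U -> Prop :=
  fun y => exists w, W w /\ y = act p w.

Definition act_list (Atom U : Type) (act : perm Atom -> U -> U)
  (p : perm Atom) (l : list U) : list U := map (act p) l.

Definition act_fun (Atom U V : Type) (actU : perm Atom -> U -> U)
  (actV : perm Atom -> V -> V) (p : perm Atom) (f : U -> V) : U -> V :=
  fun x => actV p (f (actU (perm_inv p) x)).

Definition finite_set (U : Type) (X : U -> Prop) : Prop :=
  exists l : list U, forall x, X x -> In x l.

Definition infinite_set (U : Type) (X : U -> Prop) : Prop := ~ finite_set X.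

Definition setT (U : Type) : U -> Prop := fun _ => True.

Definition subset (U : Type) (X Y : U -> Prop) : Prop := forall x, X x -> Y x.

Definition Pfs (Atom : Type) : (Atom -> Prop) -> Prop :=
  fun W => fsupp (act_pow (@act_atom Atom)) W.
Definition Pfin (Atom : Type) : (Atom -> Prop) -> Prop :=
  fun W => finite_set W.
Definition Pcofin (Atom : Type) : (Atom -> Prop) -> Prop :=
  fun W => finite_set (fun a => ~ W a).
Definition Pfin_Pfs (Atom : Type) : ((Atom -> Prop) -> Prop) -> Prop :=
  fun F => finite_set F /\ subset F (@Pfs Atom).
Definition Tfin (Atom : Type) : list Atom -> Prop := fun l => NoDup l.

(* Y^X_fs, for X the whole ambient type U (as is the case for X = A):
   functions f : X -> Y with f(p.x) = p.f(x) for all p in Fix(S), S finite. *)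
Definition FunFS (Atom U V : Type) (actU : perm Atom -> U -> U)
  (actV : perm Atom -> V -> V) (Y : V -> Prop) : (U -> V) -> Prop :=
  fun f => (forall x, Y (f x)) /\
    exists S : list Atom, forall p, fixes S p ->
      forall x, f (actU p x) = actV p (f x).

Definition total_order_on (U : Type) (Y : U -> Prop) (R : U * U -> Prop) : Prop :=
  (forall x y, R (x, y) -> Y x /\ Y y) /\
  (forall x, Y x -> R (x, x)) /\
  (forall x y, Y x -> Y y -> R (x, y) -> R (y, x) -> x = y) /\
  (forall x y z, Y x -> Y y -> Y z -> R (x, y) -> R (y, z) -> R (x, z)) /\
  (forall x y, Y x -> Y y -> R (x, y) \/ R (y, x)).

Definition FSM_Mostowski_infinite (Atom U : Type) (act : perm Atom -> U -> U)
  (X : U -> Prop) : Prop :=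
  exists (Y : U -> Prop) (R : U * U -> Prop),
    subset Y X /\ infinite_set Y /\ fsupp (act_pow act) Y /\
    fsupp (act_pow (act_prod act act)) R /\ total_order_on Y R.

Definition FSM_TarskiII_infinite (Atom U : Type) (act : perm Atom -> U -> U)
  (X : U -> Prop) : Prop :=
  exists F : (U -> Prop) -> Prop,
    (exists Z, F Z) /\
    fsupp (act_pow (act_pow act)) F /\
    (forall Z, F Z -> subset Z X /\ fsupp (act_pow act) Z) /\
    (forall Z1 Z2, F Z1 -> F Z2 -> subset Z1 Z2 \/ subset Z2 Z1) /\
    (forall Z, F Z -> exists Z', F Z' /\ subset Z Z' /\ ~ subset Z' Z).

(* Main.v *)
Require Import Defs.
From Stdlib Require Import List.
From Stdlib Require Import Classical ClassicalEpsilon FunctionalExtensionality PropExtensionality.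
Import ListNotations.

Definition eqd {Atom : Type} (a b : Atom) : {a = b} + {a <> b} :=
  excluded_middle_informative (a = b).

Definition swf {Atom : Type} (a b x : Atom) : Atom :=
  if eqd x a then b else if eqd x b then a else x.

Lemma swf_invol {Atom : Type} (a b x : Atom) : swf a b (swf a b x) = x.
Proof.
  unfold swf. destruct (eqd x a); destruct (eqd x b); subst;
  repeat (destruct (eqd _ _)); subst; congruence.
Qed.

Lemma swf_a {Atom : Type} (a b : Atom) : swf a b a = b.
Proof. unfold swf. destruct (eqd a a); congruence. Qed.

Lemma swf_b {Atom : Type} (a b : Atom) : swf a b b = a.
Proof. unfold swf. destruct (eqd b a); destruct (eqd b b); congruence. Qed.

Lemma swf_o {Atom : Type} (a b x : Atom) : x <> a -> x <> b -> swf a b x = x.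
Proof. intros. unfold swf. destruct (eqd x a); destruct (eqd x b); congruence. Qed.

Lemma swf_fin {Atom : Type} (a b : Atom) :
  exists l : list Atom, forall x, ~ In x l -> swf a b x = x.
Proof. exists [a;b]. intros x Hx. apply swf_o; intro; subst; apply Hx; simpl; auto. Qed.

Definition sw {Atom : Type} (a b : Atom) : perm Atom :=
  @Perm Atom (swf a b) (swf a b) (swf_invol a b) (swf_invol a b) (swf_fin a b).

Lemma sw_fixes {Atom : Type} (S : list Atom) a b :
  ~ In a S -> ~ In b S -> fixes S (sw a b).
Proof.
  intros Ha Hb x Hx. simpl. apply swf_o; intro; subst; auto.
Qed.

Definition invol {Atom U : Type} (act : perm Atom -> U -> U) : Prop :=
  forall (a b : Atom) x, act (sw a b) (act (sw a b) x) = x.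

Lemma invol_atom {Atom : Type} : invol (@act_atom Atom).
Proof. intros a b x. apply swf_invol. Qed.

Lemma invol_sum {Atom U V : Type} (actU : perm Atom -> U -> U) (actV : perm Atom -> V -> V) :
  invol actU -> invol actV -> invol (act_sum actU actV).
Proof. intros HU HV a b [x|x]; simpl; congruence. Qed.

Lemma invol_prod {Atom U V : Type} (actU : perm Atom -> U -> U) (actV : perm Atom -> V -> V) :
  invol actU -> invol actV -> invol (act_prod actU actV).
Proof. intros HU HV a b [x y]; unfold act_prod; simpl; congruence. Qed.

Lemma invol_list {Atom U : Type} (act : perm Atom -> U -> U) :
  invol act -> invol (act_list act).
Proof.
  intros H a b l. unfold act_list. rewrite map_map.
  induction l; simpl; congruence.
Qed.

Lemma pow_sw {Atom U : Type} (act : perm Atom -> U -> U) (H : invol act) a b W y :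
  act_pow act (sw a b) W y <-> W (act (sw a b) y).
Proof.
  split.
  - intros [w [Hw ->]]. rewrite H. auto.
  - intros Hy. exists (act (sw a b) y). rewrite H. auto.
Qed.

Lemma invol_pow {Atom U : Type} (act : perm Atom -> U -> U) :
  invol act -> invol (act_pow act).
Proof.
  intros H a b W. apply functional_extensionality; intro y.
  apply propositional_extensionality.
  rewrite !pow_sw by auto. rewrite H. tauto.
Qed.
Lemma invol_fun {Atom V : Type} (actV : perm Atom -> V -> V) :
  invol actV -> invol (act_fun (@act_atom Atom) actV).
Proof.
  intros H a b f. apply functional_extensionality; intro x.
  unfold act_fun, act_atom. simpl. rewrite swf_invol. apply H.
Qed.

Lemma fun_inv_pt {Atom V : Type} (actV : perm Atom -> V -> V) a b f :
  act_fun (@act_atom Atom) actV (sw a b) f = f ->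
  forall x, f x = actV (sw a b) (f (swf a b x)).
Proof. intros H x. exact (eq_sym (f_equal (fun g => g x) H)). Qed.

Lemma mostowski_gen {Atom U : Type} (act : perm Atom -> U -> U) (X : U -> Prop) :
  invol act ->
  (forall S : list Atom, exists l, forall x, X x ->
     (forall a b, ~ In a S -> ~ In b S -> act (sw a b) x = x) -> In x l) ->
  ~ FSM_Mostowski_infinite act X.
Proof.
  intros Hinv Fin [Y [R [HYX [HYinf [[S1 HS1] [[S2 HS2] HR]]]]]].
  destruct (Fin (S1 ++ S2)) as [l Hl].
  apply HYinf. exists l. intros y Hy. apply Hl; [apply HYX; auto|].
  intros a b Ha Hb.
  assert (Hf1 : fixes S1 (sw a b)) by (apply sw_fixes; intro; [apply Ha|apply Hb]; apply in_or_app; auto).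
  assert (Hf2 : fixes S2 (sw a b)) by (apply sw_fixes; intro; [apply Ha|apply Hb]; apply in_or_app; auto).
  specialize (HS1 _ Hf1). specialize (HS2 _ Hf2).
  assert (HYt : Y (act (sw a b) y)) by (rewrite <- HS1; exists y; auto).
  destruct HR as [Hdom [Hrefl [Hanti [Htrans Htot]]]].
  assert (Hsym : forall u v, R (u, v) -> R (act (sw a b) u, act (sw a b) v)).
  { intros u v Huv. rewrite <- HS2. exists (u, v). auto. }
  destruct (Htot _ _ Hy HYt) as [H1|H1].
  - symmetry. apply Hanti; auto. apply Hsym in H1. rewrite Hinv in H1. auto.
  - apply Hanti; auto. apply Hsym in H1. rewrite Hinv in H1. auto.
Qed.

Lemma chain_max {U : Type} (l : list (U -> Prop)) : forall F : (U -> Prop) -> Prop,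
  (exists Z, F Z) -> (forall Z, F Z -> In Z l) ->
  (forall Z1 Z2, F Z1 -> F Z2 -> subset Z1 Z2 \/ subset Z2 Z1) ->
  exists M, F M /\ forall Z, F Z -> subset Z M.
Proof.
  induction l as [|h t IH]; intros F Hne Hin Hch.
  - destruct Hne as [Z HZ]. destruct (Hin _ HZ).
  - destruct (classic (exists Z, F Z /\ Z <> h)) as [Hex|Hnex].
    + destruct (IH (fun Z => F Z /\ Z <> h)) as [M [[HM1 HM2] HM]].
      * auto.
      * intros Z [HZ1 HZ2]. destruct (Hin _ HZ1); [congruence|auto].
      * intros Z1 Z2 [? _] [? _]; auto.
      * destruct (classic (F h)) as [Fh|nFh].
        -- destruct (Hch _ _ Fh HM1) as [Hhm|Hmh].
           ++ exists M. split; auto. intros Z HZ. destruct (classic (Z = h)) as [->|]; auto.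
           ++ exists h. split; auto. intros Z HZ. destruct (classic (Z = h)) as [->|].
              ** intros x; auto.
              ** intros x Hx. apply Hmh. apply (HM Z); auto.
        -- exists M. split; auto. intros Z HZ. apply HM. split; auto. intro; subst; auto.
    + destruct Hne as [Z HZ].
      assert (Z = h) by (apply NNPP; intro; apply Hnex; eauto). subst.
      exists h. split; auto. intros Z' HZ'.
      assert (Z' = h) by (apply NNPP; intro; apply Hnex; eauto). subst. intros x; auto.
Qed.

Lemma tarski_gen {Atom U : Type} (act : perm Atom -> U -> U) (X : U -> Prop) :
  invol act ->
  (forall S : list Atom, exists l : list (U -> Prop), forall Z, subset Z X ->
     (forall a b, ~ In a S -> ~ In b S -> forall x, Z (act (sw a b) x) <-> Z x) -> In Z l) ->
  ~ FSM_TarskiII_infinite act X.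
Proof.
  intros Hinv Fin [F [Hne [[S HS] [Hsub [Hch Hnomax]]]]].
  destruct (Fin S) as [l Hl].
  assert (HinvZ : forall Z, F Z -> forall a b, ~ In a S -> ~ In b S ->
            forall x, Z (act (sw a b) x) <-> Z x).
  { intros Z HZ a b Ha Hb.
    assert (Hf : fixes S (sw a b)) by (apply sw_fixes; auto).
    specialize (HS _ Hf).
    assert (HtZ : F (act_pow act (sw a b) Z)) by (rewrite <- HS; exists Z; auto).
    destruct (Hch _ _ HZ HtZ) as [H1|H1].
    - assert (K : forall x, Z x -> Z (act (sw a b) x)).
      { intros x Hx. apply H1 in Hx. rewrite pow_sw in Hx; auto. }
      intros x; split; intros Hx; auto. apply K in Hx. rewrite Hinv in Hx; auto.
    - assert (K : forall x, Z (act (sw a b) x) -> Z x).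
      { intros x Hx. apply H1. rewrite pow_sw; auto. }
      intros x; split; intros Hx; auto. apply K. rewrite Hinv; auto. }
  destruct (chain_max l F Hne) as [M [HM HMax]].
  - intros Z HZ. apply Hl; [apply Hsub; auto|]. apply HinvZ; auto.
  - auto.
  - destruct (Hnomax _ HM) as [Z' [HZ' [_ Hn]]]. apply Hn. apply HMax; auto.
Qed.

Fixpoint tuples {V : Type} (vals : list V) (n : nat) : list (list V) :=
  match n with
  | 0 => [[]]
  | S m => flat_map (fun v => map (cons v) (tuples vals m)) vals
  end.

Lemma tuples_in {V : Type} (vals : list V) (c : list V) :
  (forall x, In x c -> In x vals) -> In c (tuples vals (length c)).
Proof.
  induction c as [|v c IH]; intros H; simpl; auto.
  apply in_flat_map. exists v. split; [apply H; simpl; auto|].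
  apply in_map. apply IH. intros; apply H; simpl; auto.
Qed.

Lemma map_eq_in {U V : Type} (f g : U -> V) (l : list U) :
  map f l = map g l -> forall r, In r l -> f r = g r.
Proof.
  induction l; simpl; intros H r Hr; [destruct Hr|].
  injection H; intros. destruct Hr; subst; auto.
Qed.

Lemma fin_det {U V : Type} (P : (U -> V) -> Prop) (reps : list U) (vals : list V) :
  (forall f, P f -> forall r, In r reps -> In (f r) vals) ->
  (forall f g, P f -> P g -> (forall r, In r reps -> f r = g r) -> f = g) ->
  exists l, forall f, P f -> In f l.
Proof.
  intros Hv Hd.
  destruct (classic (exists f, P f)) as [[f0 Hf0]|Hn].
  - exists (map (fun c => epsilon (inhabits f0) (fun g => P g /\ map g reps = c))
               (tuples vals (length reps))).
    intros f Hf.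
    assert (Hc : In (map f reps) (tuples vals (length reps))).
    { rewrite <- (length_map f reps). apply tuples_in.
      intros x Hx. apply in_map_iff in Hx. destruct Hx as [r [<- Hr]]. apply Hv; auto. }
    apply in_map_iff. exists (map f reps). split; auto.
    destruct (epsilon_spec (inhabits f0) (fun g => P g /\ map g reps = map f reps))
      as [Hg1 Hg2]; [exists f; auto|].
    apply Hd; auto. apply map_eq_in. auto.
  - exists []. intros f Hf. exfalso; eauto.
Qed.

Lemma prop_vals (P : Prop) : In P [True; False].
Proof.
  destruct (classic P) as [H|H]; simpl.
  - left. apply propositional_extensionality; tauto.
  - right; left. apply propositional_extensionality; tauto.
Qed.
Lemma fresh {Atom : Type} (Hinf : atoms_infinite Atom) (l : list Atom) :
  exists c, ~ In c l.
Proof. apply Hinf. Qed.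

Lemma atom_inv {Atom : Type} (Hinf : atoms_infinite Atom) (S : list Atom) (x : Atom) :
  (forall a b, ~ In a S -> ~ In b S -> swf a b x = x) -> In x S.
Proof.
  intros H. apply NNPP; intro Hx.
  destruct (Hinf (x :: S)) as [c Hc].
  assert (Hc' : ~ In c S) by (intro; apply Hc; simpl; auto).
  specialize (H x c Hx Hc'). rewrite swf_a in H. apply Hc. simpl; auto.
Qed.

Lemma inv_set_list {Atom : Type} (Hinf : atoms_infinite Atom) (S : list Atom) :
  exists l, forall W : Atom -> Prop,
    (forall a b, ~ In a S -> ~ In b S -> forall x, W (swf a b x) <-> W x) -> In W l.
Proof.
  destruct (Hinf S) as [e He].
  apply (fin_det _ (e :: S) [True; False]).
  - intros; apply prop_vals.
  - intros W1 W2 H1 H2 Hr. apply functional_extensionality; intro x.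
    destruct (classic (In x (e :: S))) as [Hx|Hx]; auto.
    assert (Hx' : ~ In x S) by (intro; apply Hx; simpl; auto).
    assert (Hxe : x <> e) by (intro; subst; apply Hx; simpl; auto).
    apply propositional_extensionality.
    rewrite <- (H1 x e Hx' He x), <- (H2 x e Hx' He x), swf_a.
    rewrite (Hr e); [tauto|simpl; auto].
Qed.

Lemma supports_mono {Atom U : Type} (act : perm Atom -> U -> U) S S' x :
  supports act S x -> incl S S' -> supports act S' x.
Proof. intros H Hi p Hp. apply H. intros a Ha. apply Hp. apply Hi; auto. Qed.

Lemma collect {Atom U : Type} (act : perm Atom -> U -> U) (Q : U -> Prop) (l : list U) :
  (forall x, Q x -> fsupp act x) ->
  exists T, forall x, In x l -> Q x -> supports act T x.
Proof.
  intros HQ. induction l as [|h t IH].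
  - exists []. intros x [].
  - destruct IH as [T HT].
    destruct (classic (Q h)) as [Qh|nQh].
    + destruct (HQ h Qh) as [Sh HSh]. exists (Sh ++ T).
      intros x [->|Hx] Qx.
      * eapply supports_mono; eauto. intros y Hy; apply in_or_app; auto.
      * eapply supports_mono; eauto. intros y Hy; apply in_or_app; auto.
    + exists T. intros x [->|Hx] Qx; [contradiction|auto].
Qed.

Lemma supp_swap {Atom : Type} T (W : Atom -> Prop) u v :
  supports (act_pow (@act_atom Atom)) T W -> ~ In u T -> ~ In v T -> (W u <-> W v).
Proof.
  intros H Hu Hv. specialize (H _ (sw_fixes T u v Hu Hv)).
  assert (K := pow_sw _ (@invol_atom Atom) u v W u). rewrite H in K.
  unfold act_atom in K; simpl in K. rewrite swf_a in K. auto.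
Qed.

Lemma notin_cons {A : Type} (x y : A) l : ~ In x (y :: l) -> x <> y /\ ~ In x l.
Proof. intros H; split; [intro; subst; apply H; simpl; auto | intro; apply H; simpl; auto]. Qed.

Lemma notin_app {A : Type} (x : A) l1 l2 : ~ In x (l1 ++ l2) -> ~ In x l1 /\ ~ In x l2.
Proof. intros H; split; intro; apply H; apply in_or_app; auto. Qed.

Lemma family_member_inv {Atom : Type} (Hinf : atoms_infinite Atom) (S : list Atom)
  (G : (Atom -> Prop) -> Prop) :
  finite_set G -> subset G (@Pfs Atom) ->
  (forall a b, ~ In a S -> ~ In b S -> forall Z, G Z -> G (act_pow (@act_atom Atom) (sw a b) Z)) ->
  forall Z, G Z -> forall a b, ~ In a S -> ~ In b S -> forall x, Z (swf a b x) <-> Z x.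
Proof.
  intros [lg Hlg] HPfs HG Z HZ.
  destruct (collect (act_pow (@act_atom Atom)) G lg HPfs) as [T HT].
  assert (HT' : forall W, G W -> supports (act_pow (@act_atom Atom)) T W) by auto.
  destruct (Hinf (S ++ T)) as [e He]. apply notin_app in He as [HeS HeT].
  assert (Key : forall a, ~ In a S -> (Z a <-> Z e)).
  { intros a Ha.
    destruct (Hinf (a :: e :: S ++ T)) as [c Hc].
    apply notin_cons in Hc as [Hca Hc]. apply notin_cons in Hc as [Hce Hc].
    apply notin_app in Hc as [HcS HcT].
    destruct (Hinf (a :: c :: e :: S ++ T)) as [d Hd].
    apply notin_cons in Hd as [Hda Hd]. apply notin_cons in Hd as [Hdc Hd].
    apply notin_cons in Hd as [Hde Hd]. apply notin_app in Hd as [HdS HdT].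
    assert (HZc := HG a c Ha HcS Z HZ).
    assert (E1 : act_pow (@act_atom Atom) (sw a c) Z c <-> Z a).
    { rewrite pow_sw by apply invol_atom. unfold act_atom; simpl. rewrite swf_b. tauto. }
    assert (E2 : act_pow (@act_atom Atom) (sw a c) Z d <-> Z d).
    { rewrite pow_sw by apply invol_atom. unfold act_atom; simpl. rewrite swf_o by auto. tauto. }
    assert (E3 : Z d <-> Z e) by (apply (supp_swap T); auto).
    assert (E4 := supp_swap T _ c d (HT' _ HZc) HcT HdT).
    tauto. }
  intros a b Ha Hb x.
  destruct (eqd x a) as [->|Hxa]; [rewrite swf_a; rewrite (Key a), (Key b); tauto|].
  destruct (eqd x b) as [->|Hxb]; [rewrite swf_b; rewrite (Key a), (Key b); tauto|].
  rewrite swf_o; tauto.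
Qed.
Lemma pow_eq_inv {Atom : Type} a b (W : Atom -> Prop) :
  act_pow (@act_atom Atom) (sw a b) W = W -> forall x, W (swf a b x) <-> W x.
Proof.
  intros H x. assert (K := pow_sw _ (@invol_atom Atom) a b W x). rewrite H in K.
  unfold act_atom in K; simpl in K. tauto.
Qed.

Lemma M_atom {Atom : Type} (Hinf : atoms_infinite Atom) :
  ~ FSM_Mostowski_infinite (@act_atom Atom) (@setT Atom).
Proof.
  apply mostowski_gen; [apply invol_atom|]. intros S. exists S. intros x _ H.
  apply (atom_inv Hinf). exact H.
Qed.

Lemma M_sum {Atom : Type} (Hinf : atoms_infinite Atom) :
  ~ FSM_Mostowski_infinite (act_sum (@act_atom Atom) (@act_atom Atom)) (@setT (Atom + Atom)).
Proof.
  apply mostowski_gen; [apply invol_sum; apply invol_atom|]. intros S.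
  exists (map inl S ++ map inr S). intros [x|x] _ H; apply in_or_app.
  - left. apply in_map. apply (atom_inv Hinf). intros a b Ha Hb.
    specialize (H a b Ha Hb). simpl in H. injection H; auto.
  - right. apply in_map. apply (atom_inv Hinf). intros a b Ha Hb.
    specialize (H a b Ha Hb). simpl in H. injection H; auto.
Qed.

Lemma M_prod {Atom : Type} (Hinf : atoms_infinite Atom) :
  ~ FSM_Mostowski_infinite (act_prod (@act_atom Atom) (@act_atom Atom)) (@setT (Atom * Atom)).
Proof.
  apply mostowski_gen; [apply invol_prod; apply invol_atom|]. intros S.
  exists (list_prod S S). intros [x y] _ H. apply in_prod.
  - apply (atom_inv Hinf). intros a b Ha Hb.
    specialize (H a b Ha Hb). unfold act_prod in H. simpl in H. injection H; auto.
  - apply (atom_inv Hinf). intros a b Ha Hb.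
    specialize (H a b Ha Hb). unfold act_prod in H. simpl in H. injection H; auto.
Qed.

Lemma M_sets {Atom : Type} (Hinf : atoms_infinite Atom) (X : (Atom -> Prop) -> Prop) :
  ~ FSM_Mostowski_infinite (act_pow (@act_atom Atom)) X.
Proof.
  apply mostowski_gen; [apply invol_pow; apply invol_atom|]. intros S.
  destruct (inv_set_list Hinf S) as [l Hl]. exists l. intros W _ H.
  apply Hl. intros a b Ha Hb. apply pow_eq_inv. auto.
Qed.

Lemma M_fam {Atom : Type} (Hinf : atoms_infinite Atom) :
  ~ FSM_Mostowski_infinite (act_pow (act_pow (@act_atom Atom))) (@Pfin_Pfs Atom).
Proof.
  apply mostowski_gen; [apply invol_pow; apply invol_pow; apply invol_atom|]. intros S.
  destruct (inv_set_list Hinf S) as [L HL].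
  destruct (fin_det (fun G : (Atom -> Prop) -> Prop => forall Z, G Z -> In Z L) L [True; False])
    as [l Hl].
  - intros; apply prop_vals.
  - intros G1 G2 H1 H2 Hr. apply functional_extensionality; intro Z.
    apply propositional_extensionality.
    destruct (classic (In Z L)) as [HZ|HZ].
    + rewrite (Hr Z HZ). tauto.
    + split; intro K; exfalso; apply HZ; auto.
  - exists l. intros G [Gfin Gsub] H. apply Hl. intros Z HZ. apply HL.
    apply (family_member_inv Hinf S G Gfin Gsub); auto.
    intros a b Ha Hb Z' HZ'. specialize (H a b Ha Hb).
    rewrite <- H. rewrite pow_sw by (apply invol_pow; apply invol_atom).
    rewrite invol_pow by apply invol_atom. auto.
Qed.

Lemma fun_det {Atom V : Type} (actV : perm Atom -> V -> V) (S : list Atom) e (He : ~ In e S)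
  (f g : Atom -> V) :
  (forall a b, ~ In a S -> ~ In b S -> forall x, f x = actV (sw a b) (f (swf a b x))) ->
  (forall a b, ~ In a S -> ~ In b S -> forall x, g x = actV (sw a b) (g (swf a b x))) ->
  (forall r, In r (e :: S) -> f r = g r) -> f = g.
Proof.
  intros Hf Hg Hr. apply functional_extensionality; intro x.
  destruct (classic (In x (e :: S))) as [Hx|Hx]; auto.
  apply notin_cons in Hx as [Hxe HxS].
  rewrite (Hf x e HxS He x), (Hg x e HxS He x), swf_a, Hr; simpl; auto.
Qed.

Definition FInv {Atom V : Type} (actV : perm Atom -> V -> V) (S : list Atom) (f : Atom -> V) :=
  forall a b, ~ In a S -> ~ In b S -> forall x, f x = actV (sw a b) (f (swf a b x)).

Lemma mostowski_fun {Atom V : Type} (Hinf : atoms_infinite Atom) (actV : perm Atom -> V -> V)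
  (Y : V -> Prop) :
  invol actV ->
  (forall S e, ~ In e S -> exists vals, forall f, FunFS (@act_atom Atom) actV Y f ->
     FInv actV S f -> forall r, In r (e :: S) -> In (f r) vals) ->
  ~ FSM_Mostowski_infinite (act_fun (@act_atom Atom) actV) (FunFS (@act_atom Atom) actV Y).
Proof.
  intros Hinv Hvals. apply mostowski_gen; [apply invol_fun; auto|]. intros S.
  destruct (Hinf S) as [e He]. destruct (Hvals S e He) as [vals Hv].
  destruct (fin_det (fun f => FunFS (@act_atom Atom) actV Y f /\ FInv actV S f) (e :: S) vals)
    as [l Hl].
  - intros f [H1 H2]. apply Hv; auto.
  - intros f g [_ H1] [_ H2]. apply (fun_det actV S e); auto.
  - exists l. intros f HX H. apply Hl. split; auto.
    intros a b Ha Hb. apply fun_inv_pt. apply H; auto.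
Qed.

Lemma M_fun_atom {Atom : Type} (Hinf : atoms_infinite Atom) :
  ~ FSM_Mostowski_infinite (act_fun (@act_atom Atom) (@act_atom Atom))
       (FunFS (@act_atom Atom) (@act_atom Atom) (@setT Atom)).
Proof.
  apply (mostowski_fun Hinf); [apply invol_atom|]. intros S e He. exists (e :: S).
  intros f _ H r Hr.
  assert (K : In (f r) (r :: S)).
  { apply NNPP; intro Hb. apply notin_cons in Hb as [Hbr HbS].
    destruct (Hinf (f r :: r :: S)) as [c Hc].
    apply notin_cons in Hc as [Hcb Hc]. apply notin_cons in Hc as [Hcr HcS].
    specialize (H (f r) c HbS HcS r). unfold act_atom in H; simpl in H.
    rewrite (swf_o (f r) c r) in H by auto. rewrite swf_a in H. auto. }
  destruct K as [K|K]; [rewrite <- K; auto|right; auto].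
Qed.

Lemma M_fun_list {Atom : Type} (Hinf : atoms_infinite Atom) :
  ~ FSM_Mostowski_infinite (act_fun (@act_atom Atom) (act_list (@act_atom Atom)))
       (FunFS (@act_atom Atom) (act_list (@act_atom Atom)) (@Tfin Atom)).
Proof.
  apply (mostowski_fun Hinf); [apply invol_list; apply invol_atom|]. intros S e He.
  exists (flat_map (tuples (e :: S)) (seq 0 (Datatypes.S (length (e :: S))))).
  intros f [HY _] H r Hr.
  assert (K : forall y, In y (f r) -> In y (r :: S)).
  { intros y Hy. apply NNPP; intro Hb. apply notin_cons in Hb as [Hbr HbS].
    destruct (Hinf (y :: r :: S ++ f r)) as [c Hc].
    apply notin_cons in Hc as [Hcb Hc]. apply notin_cons in Hc as [Hcr Hc].
    apply notin_app in Hc as [HcS Hcf].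
    specialize (H y c HbS HcS r). unfold act_list in H.
    rewrite (swf_o y c r) in H by auto. apply Hcf. rewrite H.
    apply in_map_iff. exists y. split; auto. unfold act_atom; simpl. apply swf_a. }
  assert (Hinc : incl (f r) (e :: S)).
  { intros y Hy. destruct (K y Hy) as [<-|]; auto. right; auto. }
  apply in_flat_map. exists (length (f r)). split.
  - apply in_seq. split; [apply le_0_n|]. simpl.
    apply PeanoNat.Nat.lt_succ_r. change (Datatypes.S (length S)) with (length (e :: S)).
    apply NoDup_incl_length; auto. apply HY.
  - apply tuples_in. auto.
Qed.

Lemma M_fun_set {Atom : Type} (Hinf : atoms_infinite Atom) :
  ~ FSM_Mostowski_infinite (act_fun (@act_atom Atom) (act_pow (@act_atom Atom)))
       (FunFS (@act_atom Atom) (act_pow (@act_atom Atom)) (@Pfs Atom)).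
Proof.
  apply (mostowski_fun Hinf); [apply invol_pow; apply invol_atom|]. intros S e He.
  destruct (inv_set_list Hinf (e :: S)) as [L HL]. exists L.
  intros f _ H r Hr. apply HL. intros a b Ha Hb.
  apply notin_cons in Ha as [Hae HaS]. apply notin_cons in Hb as [Hbe HbS].
  assert (Hra : r <> a) by (intro; subst; destruct Hr; auto).
  assert (Hrb : r <> b) by (intro; subst; destruct Hr; auto).
  specialize (H a b HaS HbS r). rewrite swf_o in H by auto.
  apply pow_eq_inv. auto.
Qed.
Lemma T_atom {Atom : Type} (Hinf : atoms_infinite Atom) :
  ~ FSM_TarskiII_infinite (@act_atom Atom) (@setT Atom).
Proof.
  apply tarski_gen; [apply invol_atom|]. intros S.
  destruct (inv_set_list Hinf S) as [l Hl]. exists l. intros Z _ H. apply Hl. exact H.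
Qed.

Lemma act_sum_inl {Atom : Type} (a b y : Atom) :
  act_sum (@act_atom Atom) (@act_atom Atom) (sw a b) (inl y) = inl (swf a b y).
Proof. reflexivity. Qed.
Lemma act_sum_inr {Atom : Type} (a b y : Atom) :
  act_sum (@act_atom Atom) (@act_atom Atom) (sw a b) (inr y) = inr (swf a b y).
Proof. reflexivity. Qed.
Lemma act_prod_eq {Atom : Type} (a b x y : Atom) :
  act_prod (@act_atom Atom) (@act_atom Atom) (sw a b) (x, y) = (swf a b x, swf a b y).
Proof. reflexivity. Qed.

Lemma T_sum {Atom : Type} (Hinf : atoms_infinite Atom) :
  ~ FSM_TarskiII_infinite (act_sum (@act_atom Atom) (@act_atom Atom)) (@setT (Atom + Atom)).
Proof.
  apply tarski_gen; [apply invol_sum; apply invol_atom|]. intros S.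
  destruct (Hinf S) as [e He].
  destruct (fin_det (fun Z : Atom + Atom -> Prop => forall a b, ~ In a S -> ~ In b S ->
      forall x, Z (act_sum (@act_atom Atom) (@act_atom Atom) (sw a b) x) <-> Z x)
      (map inl (e :: S) ++ map inr (e :: S)) [True; False]) as [l Hl].
  - intros; apply prop_vals.
  - intros Z1 Z2 H1 H2 Hr. apply functional_extensionality; intro x.
    apply propositional_extensionality.
    destruct (classic (In x (map inl (e :: S) ++ map inr (e :: S)))) as [Hx|Hx].
    + rewrite (Hr x Hx); tauto.
    + destruct x as [y|y].
      * assert (Hy : ~ In y (e :: S)) by (intro; apply Hx; apply in_or_app; left; apply in_map; auto).
        apply notin_cons in Hy as [Hye HyS].
        rewrite <- (H1 y e HyS He), <- (H2 y e HyS He), act_sum_inl, swf_a.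
        rewrite (Hr (inl e)); [tauto|apply in_or_app; left; simpl; auto].
      * assert (Hy : ~ In y (e :: S)) by (intro; apply Hx; apply in_or_app; right; apply in_map; auto).
        apply notin_cons in Hy as [Hye HyS].
        rewrite <- (H1 y e HyS He), <- (H2 y e HyS He), act_sum_inr, swf_a.
        rewrite (Hr (inr e)); [tauto|apply in_or_app; right; simpl; auto].
  - exists l. intros Z _ H. apply Hl. exact H.
Qed.

Definition PInv {Atom : Type} (S : list Atom) (Z : Atom * Atom -> Prop) :=
  forall a b, ~ In a S -> ~ In b S ->
  forall p, Z (act_prod (@act_atom Atom) (@act_atom Atom) (sw a b) p) <-> Z p.

Lemma T_prod {Atom : Type} (Hinf : atoms_infinite Atom) :
  ~ FSM_TarskiII_infinite (act_prod (@act_atom Atom) (@act_atom Atom)) (@setT (Atom * Atom)).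
Proof.
  apply tarski_gen; [apply invol_prod; apply invol_atom|]. intros S.
  destruct (Hinf S) as [e He].
  destruct (Hinf (e :: S)) as [e' He'].
  apply notin_cons in He' as [He'e He'S].
  set (K := e :: e' :: S).
  assert (R1 : forall x y, In x K -> exists y', In y' K /\
            forall Z, PInv S Z -> (Z (x, y) <-> Z (x, y'))).
  { intros x y Hx. destruct (classic (In y K)) as [Hy|Hy].
    - exists y. split; auto. tauto.
    - set (z := if eqd x e then e' else e).
      assert (Hz : In z K /\ z <> x /\ ~ In z S).
      { unfold z; destruct (eqd x e) as [->|Hxe]; unfold K; simpl; auto. }
      destruct Hz as [HzK [Hzx HzS]].
      assert (HyS : ~ In y S) by (intro; apply Hy; unfold K; simpl; auto).
      assert (Hxy : x <> y) by (intro; subst; auto).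
      exists z. split; auto. intros Z HZ.
      rewrite <- (HZ y z HyS HzS), act_prod_eq, swf_a, swf_o; auto; tauto. }
  destruct (fin_det (PInv S) (list_prod K K) [True; False]) as [l Hl].
  - intros; apply prop_vals.
  - intros Z1 Z2 H1 H2 Hr. apply functional_extensionality; intros [x y].
    apply propositional_extensionality.
    assert (R2 : exists x' y', In x' K /\ In y' K /\
              forall Z, PInv S Z -> (Z (x, y) <-> Z (x', y'))).
    { destruct (classic (In x K)) as [Hx|Hx].
      - destruct (R1 x y Hx) as [y' [Hy' Hz]]. exists x, y'. auto.
      - assert (HxS : ~ In x S) by (intro; apply Hx; unfold K; simpl; auto).
        destruct (R1 e (swf x e y)) as [y' [Hy' Hz]]; [unfold K; simpl; auto|].
        exists e, y'. split; [unfold K; simpl; auto|]. split; [auto|].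
        intros Z HZ. rewrite <- (HZ x e HxS He), act_prod_eq, swf_a. apply Hz; auto. }
    destruct R2 as [x' [y' [Hx' [Hy' Hz]]]].
    rewrite (Hz Z1 H1), (Hz Z2 H2), (Hr (x', y')); [tauto|apply in_prod; auto].
  - exists l. intros Z _ H. apply Hl. exact H.
Qed.

Lemma infinite_via {Atom U : Type} (Hinf : atoms_infinite Atom) (f : Atom -> U) (g : U -> Atom) :
  (forall a, g (f a) = a) -> infinite_set (@setT U).
Proof.
  intros Hgf [l Hl]. destruct (Hinf (map g l)) as [a Ha]. apply Ha.
  rewrite <- (Hgf a). apply in_map. apply Hl. exact I.
Qed.

Theorem mainTheorem17 (Atom : Type) (Hinf : atoms_infinite Atom) :
  (* (1) *)
  (infinite_set (@setT Atom) /\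
   infinite_set (@setT (Atom + Atom)) /\
   infinite_set (@setT (Atom * Atom)) /\
   ~ FSM_Mostowski_infinite (@act_atom Atom) (@setT Atom) /\
   ~ FSM_Mostowski_infinite (act_sum (@act_atom Atom) (@act_atom Atom)) (@setT (Atom + Atom)) /\
   ~ FSM_Mostowski_infinite (act_prod (@act_atom Atom) (@act_atom Atom)) (@setT (Atom * Atom)) /\
   ~ FSM_TarskiII_infinite (@act_atom Atom) (@setT Atom) /\
   ~ FSM_TarskiII_infinite (act_sum (@act_atom Atom) (@act_atom Atom)) (@setT (Atom + Atom)) /\
   ~ FSM_TarskiII_infinite (act_prod (@act_atom Atom) (@act_atom Atom)) (@setT (Atom * Atom))) /\
  (* (2) *)
  (~ FSM_Mostowski_infinite (act_pow (@act_atom Atom)) (@Pfin Atom) /\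
   ~ FSM_Mostowski_infinite (act_pow (@act_atom Atom)) (@Pcofin Atom) /\
   ~ FSM_Mostowski_infinite (act_pow (@act_atom Atom)) (@Pfs Atom) /\
   ~ FSM_Mostowski_infinite (act_pow (act_pow (@act_atom Atom))) (@Pfin_Pfs Atom)) /\
  (* (3) *)
  (~ FSM_Mostowski_infinite (act_fun (@act_atom Atom) (@act_atom Atom))
       (FunFS (@act_atom Atom) (@act_atom Atom) (@setT Atom)) /\
   ~ FSM_Mostowski_infinite (act_fun (@act_atom Atom) (act_list (@act_atom Atom)))
       (FunFS (@act_atom Atom) (act_list (@act_atom Atom)) (@Tfin Atom)) /\
   ~ FSM_Mostowski_infinite (act_fun (@act_atom Atom) (act_pow (@act_atom Atom)))
       (FunFS (@act_atom Atom) (act_pow (@act_atom Atom)) (@Pfs Atom))).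
Proof.
  repeat split.
  - apply (infinite_via Hinf (fun a => a) (fun a => a)); auto.
  - apply (infinite_via Hinf inl (fun s => match s with inl a => a | inr a => a end)); auto.
  - apply (infinite_via Hinf (fun a => (a, a)) fst); auto.
  - apply M_atom; auto.
  - apply M_sum; auto.
  - apply M_prod; auto.
  - apply T_atom; auto.
  - apply T_sum; auto.
  - apply T_prod; auto.
  - apply M_sets; auto.
  - apply M_sets; auto.
  - apply M_sets; auto.
  - apply M_fam; auto.
  - apply M_fun_atom; auto.
  - apply M_fun_list; auto.
  - apply M_fun_set; auto.
Qed.
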